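(* Let $n\ge2$. (i) For every $\delta>0$, \[ \lim_{\substack{x\to\infty\\ \{\log_2(\gamma_n x)\}\ge\delta}}\ \mathbb{P}\Big\{\frac{S_n}{n}>x\Big\}\,x\,2^{-\{\log_2(\gamma_n x)\}}=1 . \] (ii) For every $c>1$, \[ \lim_{m\to\infty}\ \sup_{\frac{2^m}{\gamma_n}+c\le x<\frac{2^{m+1}}{\gamma_n}}\ \mathbb{P}\Big\{\frac{S_n}{n}>x\Big\}\,x\,2^{-\{\log_2(\gamma_n x)\}}=1+\mathbb{P}\{S_{n-1}>nc\}>1 . \]
   Context: $X_1,X_2,\ldots$ are iid St.~Petersburg random variables: $\mathbb{P}\{X_i=2^k\}=2^{-k}$, $k\in\{1,2,\ldots\}$; $S_n=X_1+\dots+X_n$; $\gamma_n=n/2^{\lceil\log_2 n\rceil}$; $\{y\}$ denotes the fractional part of $y$. In (ii), $m$ runs over the positive integers. *)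

(* Defs.v *)
From Stdlib Require Import Reals Lra Lia ZArith Arith.
Open Scope R_scope.

(* Distribution function of S_n = X_1 + ... + X_n, X_i iid St. Petersburg:
   P{X = 2^k} = 2^{-k}, k >= 1.  The law of S_{n+1} is the convolution of
   the law of S_n with that of X:
     P{S_{n+1} <= t} = sum_{k>=1} 2^{-k} P{S_n <= t - 2^k}.
   Since S_n >= 0, only k with 2^k <= t contribute; every k >= up t
   satisfies 2^k > t, so the series is the finite sum over
   k = 1 .. Z.to_nat (up t) + 1 (extra terms are 0). *)
Fixpoint cdf_S (n : nat) (t : R) : R :=
  match n with
  | O => if Rle_dec 0 t then 1 else 0
  | S n' => sum_f_R0 (fun i => (/ 2) ^ (S i) * cdf_S n' (t - 2 ^ (S i)))
                     (Z.to_nat (up t))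
  end.

Definition tail_S (n : nat) (t : R) : R := 1 - cdf_S n t.

Definition log2 (y : R) : R := ln y / ln 2.

Definition gamma_n (n : nat) : R := INR n / 2 ^ (Nat.log2_up n).

Definition fr (n : nat) (x : R) : R := frac_part (log2 (gamma_n n * x)).

Definition normed_tail (n : nat) (x : R) : R :=
  tail_S n (INR n * x) * x * Rpower 2 (- fr n x).

(* Main.v *)
Require Import Defs.
From Stdlib Require Import Reals Lra Lia ZArith Arith.
Open Scope R_scope.

Fixpoint ssum (f : nat -> R) (n : nat) : R :=
  match n with O => 0 | S p => ssum f p + f p end.

Lemma ssum_ext f g n : (forall i, (i < n)%nat -> f i = g i) -> ssum f n = ssum g n.
Proof.
  induction n; simpl; intros H; auto.
  rewrite IHn by (intros; apply H; lia). rewrite H by lia. reflexivity.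
Qed.

Lemma ssum_le f g n : (forall i, (i < n)%nat -> f i <= g i) -> ssum f n <= ssum g n.
Proof.
  induction n; simpl; intros H; [lra|].
  assert (ssum f n <= ssum g n) by (apply IHn; intros; apply H; lia).
  assert (f n <= g n) by (apply H; lia). lra.
Qed.

Lemma ssum_plus f g n : ssum (fun i => f i + g i) n = ssum f n + ssum g n.
Proof. induction n; simpl; [lra|]. rewrite IHn; lra. Qed.

Lemma ssum_minus f g n : ssum (fun i => f i - g i) n = ssum f n - ssum g n.
Proof. induction n; simpl; [lra|]. rewrite IHn; lra. Qed.

Lemma ssum_scal c f n : ssum (fun i => c * f i) n = c * ssum f n.
Proof. induction n; simpl; [lra|]. rewrite IHn; lra. Qed.

Lemma ssum_abs f n : Rabs (ssum f n) <= ssum (fun i => Rabs (f i)) n.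
Proof.
  induction n; simpl. rewrite Rabs_R0; lra.
  eapply Rle_trans. apply Rabs_triang. lra.
Qed.

Lemma ssum_stable f p : (forall i, (p <= i)%nat -> f i = 0) ->
  forall A, (p <= A)%nat -> ssum f A = ssum f p.
Proof.
  intros H A HA. induction HA; auto. simpl. rewrite IHHA, H by lia. lra.
Qed.

Lemma sum_f_R0_ssum f N : sum_f_R0 f N = ssum f (S N).
Proof. induction N; simpl; auto. lra. rewrite IHN. simpl. lra. Qed.

Lemma p2inv K : 2 ^ K * (/ 2) ^ K = 1.
Proof. rewrite <- Rpow_mult_distr. rewrite Rinv_r by lra. apply pow1. Qed.

Lemma pow2_pos K : 0 < 2 ^ K.
Proof. apply pow_lt; lra. Qed.

Lemma powi2_pos K : 0 < (/2) ^ K.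
Proof. apply pow_lt; lra. Qed.

Lemma ssum_geom k : ssum (fun i => (/2) ^ (S i)) k = 1 - (/2) ^ k.
Proof. induction k; [simpl; lra|]. cbn [ssum]. rewrite IHk. simpl. lra. Qed.

Lemma ssum_geom2 k : ssum (fun i => 2 ^ (S i)) k = 2 ^ (S k) - 2.
Proof. induction k; [simpl; lra|]. cbn [ssum]. rewrite IHk. simpl. lra. Qed.

Lemma pow2_le a b : (a <= b)%nat -> 2 ^ a <= 2 ^ b.
Proof. intros; apply Rle_pow; lra || auto. Qed.

Lemma pow2_lt_inv a b : 2 ^ a < 2 ^ b -> (a < b)%nat.
Proof. intros H. destruct (le_lt_dec b a) as [h|h]; auto.
  apply pow2_le in h. lra. Qed.

Lemma INR_lt_pow2 k : INR k < 2 ^ k.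
Proof.
  induction k. simpl; lra. rewrite S_INR. simpl.
  assert (1 <= 2 ^ k). { apply pow_R1_Rle. lra. } lra.
Qed.

Lemma exists_pow2_gt t : exists K, t < 2 ^ K.
Proof.
  destruct (archimed t) as [h1 h2].
  exists (Z.to_nat (up t)).
  destruct (Z_lt_le_dec (up t) 0).
  - assert (IZR (up t) < 0) by (apply IZR_lt; auto). pose proof (pow2_pos (Z.to_nat (up t))). lra.
  - pose proof (INR_lt_pow2 (Z.to_nat (up t))). rewrite INR_IZR_INZ, Z2Nat.id in H by auto. lra.
Qed.

Lemma up_bound t : t < INR (Z.to_nat (up t)) + 1.
Proof.
  destruct (archimed t) as [h1 h2].
  destruct (Z_lt_le_dec (up t) 0).
  - assert (IZR (up t) < 0) by (apply IZR_lt; auto). simpl. pose proof (pos_INR (Z.to_nat (up t))). lra.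
  - rewrite INR_IZR_INZ, Z2Nat.id by auto. lra.
Qed.

Definition gS n t i := (/ 2) ^ (S i) * cdf_S n (t - 2 ^ (S i)).

Lemma cdf_S_succ n t : cdf_S (S n) t = ssum (gS n t) (S (Z.to_nat (up t))).
Proof. simpl cdf_S. rewrite sum_f_R0_ssum. reflexivity. Qed.

Lemma cdf_neg n t : t < 0 -> cdf_S n t = 0.
Proof.
  revert t; induction n; intros t Ht.
  - simpl. destruct (Rle_dec 0 t); lra.
  - rewrite cdf_S_succ. transitivity (ssum (fun _ => 0) (S (Z.to_nat (up t)))).
    + apply ssum_ext. intros i _. unfold gS. rewrite IHn. lra.
      pose proof (pow2_pos (S i)). lra.
    + clear. induction (S _); simpl; lra.
Qed.

Lemma cdf_succ_K n t K : t < 2 ^ (S K) -> cdf_S (S n) t = ssum (gS n t) K.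
Proof.
  intros HK. rewrite cdf_S_succ.
  set (p := Nat.min K (S (Z.to_nat (up t)))).
  assert (Hz : forall i, (p <= i)%nat -> gS n t i = 0).
  { intros i Hi. unfold gS. rewrite cdf_neg. lra.
    destruct (Nat.le_ge_cases K (S (Z.to_nat (up t)))) as [h|h].
    - assert (p = K) by (unfold p; lia). 
      pose proof (pow2_le (S K) (S i) ltac:(lia)). lra.
    - assert (p = S (Z.to_nat (up t))) by (unfold p; lia).
      pose proof (INR_lt_pow2 (S i)). pose proof (up_bound t).
      assert (INR (S (Z.to_nat (up t))) <= INR (S i)) by (apply le_INR; lia).
      rewrite S_INR in H2. lra. }
  rewrite (ssum_stable _ p Hz (S (Z.to_nat (up t)))) by (unfold p; lia).
  rewrite (ssum_stable _ p Hz K) by (unfold p; lia). reflexivity.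
Qed.

Lemma cdf_bounds n t : 0 <= cdf_S n t <= 1.
Proof.
  revert t; induction n; intros t.
  - simpl. destruct (Rle_dec 0 t); lra.
  - destruct (exists_pow2_gt t) as [K HK].
    rewrite (cdf_succ_K n t K). 2:{ pose proof (pow2_le K (S K) ltac:(lia)). lra. }
    split.
    + apply Rle_trans with (ssum (fun _ => 0) K). clear; induction K; simpl; lra.
      apply ssum_le. intros i _. unfold gS. specialize (IHn (t - 2 ^ S i)).
      pose proof (powi2_pos (S i)). nra.
    + apply Rle_trans with (ssum (fun i => (/2) ^ (S i)) K).
      apply ssum_le. intros i _. unfold gS. specialize (IHn (t - 2 ^ S i)).
      pose proof (powi2_pos (S i)). nra.
      rewrite ssum_geom. pose proof (powi2_pos K). lra.
Qed.

Lemma cdf_mono n t s : t <= s -> cdf_S n t <= cdf_S n s.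
Proof.
  revert t s; induction n; intros t s Hts.
  - simpl. destruct (Rle_dec 0 t); destruct (Rle_dec 0 s); lra.
  - destruct (exists_pow2_gt s) as [K HK].
    assert (2 ^ K <= 2 ^ S K) by (apply pow2_le; lia).
    rewrite (cdf_succ_K n t K), (cdf_succ_K n s K) by lra.
    apply ssum_le. intros i _. unfold gS.
    assert (cdf_S n (t - 2 ^ S i) <= cdf_S n (s - 2 ^ S i)) by (apply IHn; lra).
    pose proof (powi2_pos (S i)). nra.
Qed.

Definition T := tail_S.

Lemma T_bounds n t : 0 <= T n t <= 1.
Proof. unfold T, tail_S. pose proof (cdf_bounds n t). lra. Qed.

Lemma T_mono n t s : t <= s -> T n s <= T n t.
Proof. unfold T, tail_S. intros h. pose proof (cdf_mono n t s h). lra. Qed.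

Lemma T_neg n t : t < 0 -> T n t = 1.
Proof. unfold T, tail_S. intros h. rewrite cdf_neg; auto; lra. Qed.

Lemma T0_nonneg t : 0 <= t -> T 0 t = 0.
Proof. unfold T, tail_S. simpl. destruct (Rle_dec 0 t); lra. Qed.

Lemma T_rec n t K : t < 2 ^ (S K) ->
  T (S n) t = ssum (fun i => (/ 2) ^ (S i) * T n (t - 2 ^ (S i))) K + (/ 2) ^ K.
Proof.
  intros HK. unfold T, tail_S. rewrite (cdf_succ_K n t K HK).
  unfold gS.
  replace (ssum (fun i => (/ 2) ^ S i * (1 - cdf_S n (t - 2 ^ S i))) K)
    with (ssum (fun i => (/ 2) ^ S i) K - ssum (fun i => (/ 2) ^ S i * cdf_S n (t - 2 ^ S i)) K).
  rewrite ssum_geom. lra.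
  rewrite <- ssum_minus. apply ssum_ext. intros; ring.
Qed.

Lemma T_tail n : exists a, 1 <= a /\ forall K s, 2 ^ K <= s -> T n s <= a * (/ 2) ^ K.
Proof.
  induction n.
  - exists 1. split; [lra|]. intros K s Hs. rewrite T0_nonneg.
    pose proof (powi2_pos K); lra. pose proof (pow2_pos K); lra.
  - destruct IHn as [a [Ha HT]]. exists (2 * a + 2). split; [lra|].
    intros K s Hs. apply Rle_trans with (T (S n) (2 ^ K)); [apply T_mono; auto|].
    destruct K as [|k].
    + simpl. pose proof (T_bounds (S n) 1). lra.
    + rewrite (T_rec n _ (S k)). 2:{ simpl. pose proof (pow2_pos k). lra. }
      cbn [ssum]. replace (2 ^ S k - 2 ^ S k) with 0 by ring.
      assert (ssum (fun i => (/ 2) ^ S i * T n (2 ^ S k - 2 ^ S i)) k <=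
              ssum (fun i => (/ 2) ^ S i * (a * (/2) ^ k)) k).
      { apply ssum_le. intros i Hi. apply Rmult_le_compat_l.
        pose proof (powi2_pos (S i)); lra. apply HT.
        pose proof (pow2_le (S i) k ltac:(lia)). replace (2 ^ S k) with (2 * 2 ^ k) by (simpl; ring). lra. }
      rewrite (ssum_ext (fun i => (/ 2) ^ S i * (a * (/2) ^ k)) (fun i => (a * (/2)^k) * (/2) ^ (S i))) in H by (intros; ring).
      rewrite ssum_scal, ssum_geom in H.
      pose proof (T_bounds n 0). pose proof (powi2_pos k). pose proof (powi2_pos (S k)).
      assert ((/2)^k = 2 * (/2)^(S k)) by (simpl; field).
      nra.
Qed.

Lemma T_pos n t : 0 < T (S n) t.
Proof.
  destruct (exists_pow2_gt t) as [K HK].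
  assert (2 ^ K <= 2 ^ S K) by (apply pow2_le; lia).
  rewrite (T_rec n t K) by lra.
  assert (0 <= ssum (fun i => (/ 2) ^ S i * T n (t - 2 ^ S i)) K).
  { apply Rle_trans with (ssum (fun _ => 0) K). clear; induction K; simpl; lra.
    apply ssum_le. intros. pose proof (powi2_pos (S i)). pose proof (T_bounds n (t - 2 ^ S i)). nra. }
  pose proof (powi2_pos K). lra.
Qed.

Lemma half_S k : (/2) ^ k = 2 * (/2) ^ (S k).
Proof. simpl. field. Qed.
Lemma two_S k : 2 ^ (S k) = 2 * 2 ^ k.
Proof. reflexivity. Qed.

Lemma ssum_zero k : ssum (fun _ => 0) k = 0.
Proof. induction k; simpl; lra. Qed.

Lemma KL m : exists C, 0 <= C /\ forall K r, 0 <= r < 2 ^ K ->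
  Rabs (T (S m) (2 ^ K + r) - INR (S m) * (/2) ^ K * (1 + T m r))
    <= C * ((/2) ^ K * (/2) ^ K).
Proof.
  induction m.
  - exists 0. split; [lra|]. intros K r Hr.
    rewrite (T_rec 0 _ K). 2:{ rewrite two_S. lra. }
    rewrite (ssum_ext _ (fun _ => 0)).
    2:{ intros i Hi. rewrite T0_nonneg. ring. pose proof (pow2_le (S i) K ltac:(lia)). lra. }
    rewrite ssum_zero, T0_nonneg by lra. simpl INR.
    replace (0 + (/ 2) ^ K - 1 * (/ 2) ^ K * (1 + 0)) with 0 by ring.
    rewrite Rabs_R0. lra.
  - destruct IHm as [C [HC IH]]. destruct (T_tail m) as [a [Ha Htail]].
    set (mm := INR (S m)).
    assert (Hmm : 1 <= mm) by (unfold mm; rewrite S_INR; pose proof (pos_INR m); lra).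
    assert (Hma : 0 <= mm * a) by nra.
    exists (4 * C + 8 * mm * a + 12 * mm). split; [nra|].
    intros K r Hr. replace (INR (S (S m))) with (mm + 1) by (unfold mm; rewrite (S_INR (S m)); auto).
    destruct K as [|k].
    + simpl pow in *. rewrite (T_rec (S m) _ 0) by (simpl; lra).
      rewrite (T_rec m r 0) by (simpl; lra). simpl ssum.
      simpl pow. replace (0 + 1 - (mm + 1) * 1 * (1 + (0 + 1))) with (- (2 * mm + 1)) by ring.
      rewrite Rabs_Ropp, Rabs_right by lra. nra.
    + set (P := (/2) ^ (S k)). set (Q := P * P).
      assert (HP : 0 < P) by apply powi2_pos.
      assert (Hk2 : (/2) ^ k = 2 * P) by apply half_S.
      assert (H2P : 2 ^ k * P = / 2).
      { unfold P. simpl. pose proof (p2inv k). replace (2 ^ k * (/ 2 * (/ 2) ^ k)) with (/2 * (2^k * (/2)^k)) by ring. lra. }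
      assert (E1 : T (S (S m)) (2 ^ S k + r) =
        ssum (fun i => (/2) ^ (S i) * T (S m) (2 ^ S k + r - 2 ^ (S i))) k + P * T (S m) r + P).
      { rewrite (T_rec (S m) _ (S k)). 2:{ rewrite (two_S (S k)). lra. }
        cbn [ssum]. replace (2 ^ S k + r - 2 ^ S k) with r by ring. reflexivity. }
      assert (E2 : T (S m) r = ssum (fun i => (/2) ^ (S i) * T m (r - 2 ^ (S i))) k + 2 * P).
      { rewrite (T_rec m r k) by lra. rewrite Hk2. reflexivity. }
      set (A := fun i => (/2) ^ (S i) * T (S m) (2 ^ S k + r - 2 ^ (S i))).
      set (B := fun i => mm * P * ((/2) ^ (S i) * (1 + T m (r - 2 ^ (S i))))).
      assert (EB : ssum B k = mm * P * (1 - 2 * P) + mm * P * (T (S m) r - 2 * P)).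
      { unfold B. rewrite ssum_scal. rewrite (ssum_ext _ (fun i => (/2) ^ (S i) + (/2) ^ (S i) * T m (r - 2 ^ S i))) by (intros; ring).
        rewrite ssum_plus, ssum_geom, Hk2, E2. ring. }
      assert (Ediff : T (S (S m)) (2 ^ S k + r) - (mm + 1) * P * (1 + T (S m) r)
                = ssum (fun i => A i - B i) k - 4 * mm * Q).
      { rewrite ssum_minus, EB, E1. fold A. unfold Q. ring. }
      fold P. rewrite Ediff.
      set (h := fun i => (/2) ^ (S i) * ((4 * C + 8 * mm * a) * Q) + 8 * mm * P * Q * 2 ^ (S i)).
      assert (Hh : forall i, (i < k)%nat -> Rabs (A i - B i) <= h i).
      { intros i Hi. unfold A, B, h.
        assert (Hu : 0 < (/2) ^ (S i)) by apply powi2_pos.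
        assert (Hv : 0 < 2 ^ (S i)) by apply pow2_pos.
        assert (HQ : 0 < Q) by (unfold Q; nra).
        pose proof (pow2_le (S i) k Hi) as Hik.
        destruct (Rle_lt_dec (2 ^ S i) r) as [Hri|Hri].
        - specialize (IH (S k) (r - 2 ^ S i) ltac:(lra)). fold P in IH. fold Q in IH.
          replace (2 ^ S k + (r - 2 ^ S i)) with (2 ^ S k + r - 2 ^ S i) in IH by ring.
          fold mm in IH.
          replace ((/ 2) ^ S i * T (S m) (2 ^ S k + r - 2 ^ S i) -
                    mm * P * ((/ 2) ^ S i * (1 + T m (r - 2 ^ S i))))
            with ((/ 2) ^ S i * (T (S m) (2 ^ S k + r - 2 ^ S i) - mm * P * (1 + T m (r - 2 ^ S i)))) by ring.
          rewrite Rabs_mult, (Rabs_right ((/2) ^ S i)) by lra.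
          assert (0 <= 8 * mm * P * Q * 2 ^ S i) by (apply Rmult_le_pos; [apply Rmult_le_pos; [apply Rmult_le_pos; [apply Rmult_le_pos|]|]|]; lra).
          assert (0 <= 8 * mm * a * Q) by (apply Rmult_le_pos; [apply Rmult_le_pos; [apply Rmult_le_pos|]|]; lra).
          assert ((/ 2) ^ S i * Rabs (T (S m) (2 ^ S k + r - 2 ^ S i) - mm * P * (1 + T m (r - 2 ^ S i)))
                  <= (/2) ^ S i * (C * Q)) by (apply Rmult_le_compat_l; lra).
          assert (0 <= (/2) ^ S i * ((3 * C + 8 * mm * a) * Q)) by (apply Rmult_le_pos; [lra| apply Rmult_le_pos; lra]). lra.
        - rewrite (T_neg m (r - 2 ^ S i)) by lra.
          set (r' := 2 ^ k + r - 2 ^ S i).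
          specialize (IH k r' ltac:(unfold r'; lra)).
          replace (2 ^ k + r') with (2 ^ S k + r - 2 ^ S i) in IH by (unfold r'; rewrite two_S; ring).
          fold mm in IH. rewrite Hk2 in IH.
          set (X := T (S m) (2 ^ S k + r - 2 ^ S i)) in *.
          assert (Hbd : (/2) ^ S i * T m r' <= 4 * a * (/2) ^ S i * P + 4 * 2 ^ S i * Q).
          { destruct (Nat.eq_dec (S i) k) as [e|e].
            - pose proof (T_bounds m r').
              assert ((/2) ^ S i * T m r' <= (/2) ^ S i) by nra.
              rewrite e in *.
              assert (4 * 2 ^ k * Q = 2 * P) by (unfold Q; replace (4 * 2 ^ k * (P * P)) with (4 * (2 ^ k * P) * P) by ring; rewrite H2P; field).
              assert (0 <= 4 * a * (/ 2) ^ k * P) by (rewrite Hk2; assert (0 <= a * P * P) by (apply Rmult_le_pos; [apply Rmult_le_pos|]; lra); lra). lra.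
            - destruct k as [|k1]; [lia|].
              assert (S i <= k1)%nat by lia.
              pose proof (pow2_le (S i) k1 H).
              assert (2 ^ k1 <= r') by (unfold r'; rewrite two_S; lra).
              specialize (Htail k1 r' H1).
              assert ((/2) ^ k1 = 4 * P) by (unfold P; rewrite (half_S k1), (half_S (S k1)); ring).
              rewrite H2 in Htail.
              assert (0 <= 4 * 2 ^ S i * Q) by (unfold Q; nra).
              assert ((/ 2) ^ S i * T m r' <= (/2) ^ S i * (a * (4 * P))) by (apply Rmult_le_compat_l; lra).
              lra. }
          replace ((/ 2) ^ S i * X - mm * P * ((/ 2) ^ S i * (1 + 1)))
            with ((/ 2) ^ S i * (X - mm * (2 * P) * (1 + T m r')) + 2 * mm * P * ((/2) ^ S i * T m r')) by ring.
          eapply Rle_trans. apply Rabs_triang.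
          rewrite Rabs_mult, (Rabs_right ((/2) ^ S i)) by lra.
          assert (0 <= (/2) ^ S i * T m r') by (pose proof (T_bounds m r'); nra).
          rewrite (Rabs_right (2 * mm * P * ((/ 2) ^ S i * T m r'))) by (apply Rle_ge; apply Rmult_le_pos; nra).
          assert (Ha1 : (/ 2) ^ S i * Rabs (X - mm * (2 * P) * (1 + T m r')) <= (/2) ^ S i * (C * (2 * P * (2 * P)))) by (apply Rmult_le_compat_l; lra).
          assert (Ha2 : 2 * mm * P * ((/ 2) ^ S i * T m r') <= 2 * mm * P * (4 * a * (/2) ^ S i * P + 4 * 2 ^ S i * Q)) by (apply Rmult_le_compat_l; nra).
          unfold Q in *. nra. }
      eapply Rle_trans. apply Rabs_triang. rewrite Rabs_Ropp.
      eapply Rle_trans. apply Rplus_le_compat_r. eapply Rle_trans. apply ssum_abs. apply ssum_le. exact Hh.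
      unfold h. rewrite ssum_plus.
      rewrite (ssum_ext (fun i => (/ 2) ^ S i * ((4 * C + 8 * mm * a) * Q)) (fun i => ((4 * C + 8 * mm * a) * Q) * (/ 2) ^ S i)) by (intros; ring).
      rewrite ssum_scal, ssum_scal, ssum_geom, ssum_geom2.
      assert (HQ : 0 < Q) by (unfold Q; nra).
      assert (8 * mm * P * Q * (2 ^ S k - 2) <= 8 * mm * Q).
      { rewrite two_S. replace (8 * mm * P * Q * (2 * 2 ^ k - 2)) with (8 * mm * Q * (2 * (2 ^ k * P)) - 16 * mm * P * Q) by ring.
        rewrite H2P. assert (0 <= mm * P * Q) by (apply Rmult_le_pos; [apply Rmult_le_pos|]; lra). lra. }
      pose proof (powi2_pos k).
      assert (0 <= mm * Q) by (apply Rmult_le_pos; lra).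
      assert (0 <= (4 * C + 8 * mm * a) * Q * (/2) ^ k) by (apply Rmult_le_pos; [apply Rmult_le_pos|]; lra).
      rewrite Rabs_right by lra. lra.
Qed.

Lemma ln2_pos : 0 < ln 2.
Proof. rewrite <- ln_1. apply ln_increasing; lra. Qed.

Lemma gamma_facts n : (1 <= n)%nat ->
  0 < gamma_n n /\ gamma_n n <= 1 /\ INR n = gamma_n n * 2 ^ (Nat.log2_up n).
Proof.
  intros hn. unfold gamma_n.
  pose proof (pow2_pos (Nat.log2_up n)).
  assert (INR n <= 2 ^ Nat.log2_up n).
  { destruct (Nat.log2_log2_up_spec n ltac:(lia)) as [_ h].
    apply le_INR in h. rewrite pow_INR in h. simpl INR in h. replace (1+1) with 2 in h by ring. exact h. }
  assert (1 <= INR n) by (apply (le_INR 1); auto).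
  split; [apply Rdiv_lt_0_compat; lra|]. split.
  - unfold Rdiv. apply Rmult_le_reg_r with (2 ^ Nat.log2_up n); auto. rewrite Rmult_assoc, Rinv_l by lra. lra.
  - field. lra.
Qed.

Lemma dyadic y : 1 <= y -> exists M, 2 ^ M <= y < 2 ^ (S M).
Proof.
  intros hy. destruct (exists_pow2_gt y) as [k hk].
  induction k.
  - simpl in hk. lra.
  - destruct (Rlt_le_dec y (2 ^ k)) as [h|h]; auto. exists k. auto.
Qed.

Lemma Rpower2_log2 y : 0 < y -> Rpower 2 (log2 y) = y.
Proof.
  intros hy. unfold Rpower, log2. pose proof ln2_pos.
  replace (ln y / ln 2 * ln 2) with (ln y) by (field; lra). apply exp_ln; auto.
Qed.

Lemma normed_eq n x M : (1 <= n)%nat ->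
  2 ^ M <= gamma_n n * x < 2 ^ (S M) ->
  fr n x = log2 (gamma_n n * x) - INR M /\
  normed_tail n x = tail_S n (INR n * x) * 2 ^ (M + Nat.log2_up n) / INR n.
Proof.
  intros hn [h1 h2]. destruct (gamma_facts n hn) as [g0 [g1 g2]].
  set (y := gamma_n n * x) in *.
  pose proof (pow2_pos M). pose proof ln2_pos.
  assert (hy : 0 < y) by lra.
  assert (l1 : INR M <= log2 y).
  { unfold log2. apply Rmult_le_reg_r with (ln 2); auto.
    replace (ln y / ln 2 * ln 2) with (ln y) by (field; lra).
    rewrite <- ln_pow by lra. destruct h1 as [h1|h1].
    left; apply ln_increasing; auto. rewrite h1; lra. }
  assert (l2 : log2 y < INR M + 1).
  { unfold log2. apply Rmult_lt_reg_r with (ln 2); auto.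
    replace (ln y / ln 2 * ln 2) with (ln y) by (field; lra).
    replace (INR M + 1) with (INR (S M)) by (rewrite S_INR; ring).
    rewrite <- ln_pow by lra. apply ln_increasing; auto. }
  assert (hfr : fr n x = log2 y - INR M).
  { unfold fr, frac_part, Int_part. fold y.
    rewrite <- (tech_up (log2 y) (Z.of_nat (S M))).
    - rewrite minus_IZR, <- INR_IZR_INZ, S_INR. simpl. ring.
    - rewrite <- INR_IZR_INZ, S_INR. lra.
    - rewrite <- INR_IZR_INZ, S_INR. lra. }
  split; auto.
  unfold normed_tail. rewrite hfr.
  assert (Rpower 2 (- (log2 y - INR M)) = 2 ^ M / y).
  { replace (- (log2 y - INR M)) with (INR M + - log2 y) by ring.
    rewrite Rpower_plus, Rpower_Ropp, Rpower_pow, Rpower2_log2 by lra. field. lra. }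
  rewrite H1. rewrite pow_add. unfold y. rewrite g2 at 3. field.
  pose proof (pow2_pos (Nat.log2_up n)). split; [lra|]. split; [lra|]. intro. subst. unfold y in hy. lra.
Qed.

Lemma main_est m : exists C, 0 <= C /\ forall x M,
  2 ^ M <= gamma_n (S m) * x < 2 ^ (S M) ->
  0 <= INR (S m) * x - 2 ^ (M + Nat.log2_up (S m)) < 2 ^ (M + Nat.log2_up (S m)) /\
  Rabs (normed_tail (S m) x - 1 - tail_S m (INR (S m) * x - 2 ^ (M + Nat.log2_up (S m))))
    <= C * (/2) ^ (M + Nat.log2_up (S m)).
Proof.
  destruct (KL m) as [C [HC HK]]. exists C. split; auto.
  intros x M HM.
  destruct (gamma_facts (S m) ltac:(lia)) as [g0 [g1 g2]].
  destruct (normed_eq (S m) x M ltac:(lia) HM) as [_ hn].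
  set (L := Nat.log2_up (S m)) in *. set (K := (M + L)%nat).
  set (n := INR (S m)) in *.
  assert (hn1 : 1 <= n) by (unfold n; apply (le_INR 1); lia).
  assert (ht : n * x = 2 ^ L * (gamma_n (S m) * x)) by (rewrite g2; ring).
  assert (hKe : 2 ^ K = 2 ^ M * 2 ^ L) by (unfold K; apply pow_add).
  pose proof (pow2_pos L). pose proof (pow2_pos M).
  assert (hr : 0 <= n * x - 2 ^ K < 2 ^ K).
  { rewrite ht, hKe. destruct HM as [h1 h2]. rewrite two_S in h2. split; nra. }
  split; auto.
  specialize (HK K (n * x - 2 ^ K) hr). fold n in HK. unfold T in HK.
  replace (2 ^ K + (n * x - 2 ^ K)) with (n * x) in HK by ring.
  rewrite hn. fold K.
  set (Tn := tail_S (S m) (n * x)) in *. set (Tm := tail_S m (n * x - 2 ^ K)) in *.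
  pose proof (p2inv K). pose proof (powi2_pos K). pose proof (pow2_pos K).
  replace (Tn * 2 ^ K / n - 1 - Tm) with ((Tn - n * (/ 2) ^ K * (1 + Tm)) * (2 ^ K / n)).
  2:{ rewrite pow_inv. field. lra. }
  rewrite Rabs_mult. rewrite (Rabs_right (2 ^ K / n)) by (apply Rle_ge; unfold Rdiv; apply Rmult_le_pos; [lra|left; apply Rinv_0_lt_compat; lra]).
  apply Rle_trans with (C * ((/ 2) ^ K * (/ 2) ^ K) * (2 ^ K / n)).
  apply Rmult_le_compat_r; auto. unfold Rdiv; apply Rmult_le_pos; [lra|left; apply Rinv_0_lt_compat; lra].
  replace (C * ((/ 2) ^ K * (/ 2) ^ K) * (2 ^ K / n)) with (C * (/ 2) ^ K * / n).
  2:{ replace (C * ((/ 2) ^ K * (/ 2) ^ K) * (2 ^ K / n)) with (C * (/ 2) ^ K * (2 ^ K * (/2) ^ K) / n) by (field; lra). rewrite H1. field. lra. }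
  assert (/ n <= 1). { rewrite <- Rinv_1. apply Rinv_le_contravar; lra. }
  assert (0 < / n) by (apply Rinv_0_lt_compat; lra).
  assert (0 <= C * (/ 2) ^ K) by (apply Rmult_le_pos; lra). nra.
Qed.

Lemma powi2_le a b : (a <= b)%nat -> (/2) ^ b <= (/2) ^ a.
Proof.
  induction 1; [lra|]. simpl. pose proof (powi2_pos m). lra.
Qed.

Lemma Rabs_le_inv x e : Rabs x <= e -> - e <= x <= e.
Proof. unfold Rabs; destruct (Rcase_abs x); lra. Qed.

Lemma small_pow e : 0 < e -> exists N, forall j, (N <= j)%nat -> (/2) ^ j < e.
Proof.
  intros he. destruct (pow_lt_1_zero (/2) ltac:(rewrite Rabs_right; lra) e he) as [N HN].
  exists N. intros j hj. specialize (HN j ltac:(lia)). rewrite Rabs_right in HN; auto.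
  left; apply powi2_pos.
Qed.

Theorem theorem2 (n : nat) (hn : (2 <= n)%nat) :
  (* (i) *)
  (forall delta : R, 0 < delta ->
     forall eps : R, 0 < eps ->
     exists M : R, forall x : R, M < x -> delta <= fr n x ->
       Rabs (normed_tail n x - 1) < eps)
  /\
  (* (ii) *)
  (forall c : R, 1 < c ->
     1 + tail_S (n - 1) (INR n * c) > 1 /\
     forall eps : R, 0 < eps ->
     exists N : nat, forall m : nat, (1 <= m)%nat -> (N <= m)%nat ->
       exists s : R,
         is_lub (fun y => exists x : R,
                    2 ^ m / gamma_n n + c <= x /\ x < 2 ^ (S m) / gamma_n n /\
                    y = normed_tail n x) s
         /\ Rabs (s - (1 + tail_S (n - 1) (INR n * c))) < eps).
Proof.
  destruct n as [|m0]; [lia|].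
  replace (S m0 - 1)%nat with m0 by lia.
  destruct (main_est m0) as [C [HC HE]].
  destruct (T_tail m0) as [a [Ha Ht]]. unfold T in Ht.
  destruct (gamma_facts (S m0) ltac:(lia)) as [g0 [g1 g2]].
  set (L := Nat.log2_up (S m0)) in *.
  set (g := gamma_n (S m0)) in *.
  set (nn := INR (S m0)) in *.
  pose proof (pow2_pos L) as HL.
  split.
  - intros delta hd eps he.
    set (eta := Rpower 2 delta - 1).
    assert (heta : 0 < eta).
    { unfold eta. pose proof (Rpower_lt 2 0 delta ltac:(lra) hd). rewrite Rpower_O in H by lra. lra. }
    destruct (small_pow eta heta) as [p Hp]. specialize (Hp p (le_n p)).
    destruct (small_pow (eps / (C + a + 1))) as [N0 HN0].
    { apply Rdiv_lt_0_compat; lra. }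
    exists (2 ^ (N0 + p) / g). intros x hx hfr.
    set (y := g * x).
    assert (hy : 2 ^ (N0 + p) < y).
    { unfold y. apply Rmult_lt_compat_l with (r := g) in hx; auto.
      replace (g * (2 ^ (N0 + p) / g)) with (2 ^ (N0 + p)) in hx by (field; lra). exact hx. }
    assert (hy1 : 1 <= y).
    { pose proof (pow2_le 0 (N0 + p) ltac:(lia)). simpl in H. lra. }
    destruct (dyadic y hy1) as [M hM].
    assert (hMN : (N0 + p < S M)%nat) by (apply pow2_lt_inv; lra).
    destruct (HE x M hM) as [hr hest].
    destruct (normed_eq (S m0) x M ltac:(lia) hM) as [hf _]. fold g y in hf.
    rewrite hf in hfr.
    assert (hy2 : 2 ^ M * (1 + eta) <= y).
    { unfold eta. rewrite <- (Rpower2_log2 y) by lra.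
      rewrite <- (Rpower_pow M 2) by lra. replace (1 + (Rpower 2 delta - 1)) with (Rpower 2 delta) by ring.
      rewrite <- Rpower_plus. apply Rle_Rpower; lra. }
    set (K := (M + L)%nat) in *.
    set (r := nn * x - 2 ^ K) in *.
    assert (hKe : 2 ^ K = 2 ^ M * 2 ^ L) by (unfold K; apply pow_add).
    assert (hrx : r = 2 ^ L * y - 2 ^ K) by (unfold r, y; rewrite g2; ring).
    set (j := (K - p)%nat).
    assert (hKj : K = (j + p)%nat) by (unfold j, K; lia).
    assert (h2j : 2 ^ j <= r).
    { assert (2 ^ K * (/2) ^ p = 2 ^ j).
      { rewrite hKj, pow_add. rewrite Rmult_assoc, p2inv. ring. }
      assert (2 ^ K * (/2) ^ p <= 2 ^ K * eta) by (apply Rmult_le_compat_l; lra).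
      assert (2 ^ K * eta <= r).
      { rewrite hrx, hKe. pose proof (pow2_pos M). nra. }
      lra. }
    specialize (Ht j r h2j).
    assert (hj : (N0 <= j)%nat) by (unfold j, K; lia).
    specialize (HN0 j hj).
    pose proof (powi2_le j K ltac:(lia)).
    pose proof (powi2_pos K). pose proof (powi2_pos j).
    pose proof (T_bounds m0 r). unfold T in H2.
    assert (C * (/2) ^ K <= C * (/2) ^ j) by (apply Rmult_le_compat_l; lra).
    assert ((C + a) * (/2) ^ j < eps).
    { apply Rlt_le_trans with ((C + a) * (eps / (C + a + 1))).
      apply Rmult_lt_compat_l; lra.
      unfold Rdiv. apply Rmult_le_reg_r with (C + a + 1); [lra|].
      rewrite !Rmult_assoc, Rinv_l by lra. nra. }
    replace (normed_tail (S m0) x - 1) with ((normed_tail (S m0) x - 1 - tail_S m0 r) + tail_S m0 r) by ring.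
    eapply Rle_lt_trans. apply Rabs_triang. rewrite (Rabs_right (tail_S m0 r)) by lra.
    lra.
  - intros c hc. split.
    { destruct m0 as [|m1]; [lia|]. pose proof (T_pos m1 (nn * c)). unfold T in H. lra. }
    intros eps he.
    destruct (small_pow (eps / (C + 1))) as [N0 HN0].
    { apply Rdiv_lt_0_compat; lra. }
    destruct (exists_pow2_gt c) as [Kc hKc].
    exists (N0 + Kc)%nat. intros mw hm1 hmN.
    set (K := (mw + L)%nat).
    assert (hKe : 2 ^ K = 2 ^ mw * 2 ^ L) by (unfold K; apply pow_add).
    pose proof (pow2_pos mw).
    assert (hcw : c < 2 ^ mw / g).
    { pose proof (pow2_le Kc mw ltac:(lia)).
      assert (2 ^ mw <= 2 ^ mw / g).
      { unfold Rdiv. rewrite <- (Rmult_1_r (2 ^ mw)) at 1. apply Rmult_le_compat_l; [lra|].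
        rewrite <- Rinv_1. apply Rinv_le_contravar; lra. }
      lra. }
    set (V := 1 + tail_S m0 (nn * c)).
    set (E := fun y => exists x : R,
                    2 ^ mw / g + c <= x /\ x < 2 ^ (S mw) / g /\ y = normed_tail (S m0) x).
    assert (hng : nn / g = 2 ^ L) by (rewrite g2; field; lra).
    assert (Hup : forall y, E y -> y <= V + C * (/2) ^ K).
    { intros y [x [hx1 [hx2 ->]]].
      assert (hM : 2 ^ mw <= g * x < 2 ^ (S mw)).
      { split.
        - apply Rmult_le_compat_l with (r := g) in hx1; [|lra].
          replace (g * (2 ^ mw / g + c)) with (2 ^ mw + g * c) in hx1 by (field; lra). nra.
        - apply Rmult_lt_compat_l with (r := g) in hx2; auto.
          replace (g * (2 ^ S mw / g)) with (2 ^ S mw) in hx2 by (field; lra). lra. }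
      destruct (HE x mw hM) as [hr hest]. fold K nn in hr, hest.
      assert (nn * c <= nn * x - 2 ^ K).
      { assert (nn * x >= nn * (2 ^ mw / g + c)).
        { apply Rle_ge, Rmult_le_compat_l; [unfold nn; apply pos_INR | exact hx1]. }
        replace (nn * (2 ^ mw / g + c)) with (2 ^ mw * (nn / g) + nn * c) in H0 by (field; lra).
        rewrite hng, <- hKe in H0. lra. }
      pose proof (T_mono m0 _ _ H0). unfold T in H1.
      unfold V. apply Rabs_le_inv in hest. lra. }
    set (x0 := 2 ^ mw / g + c).
    assert (Hx0 : E (normed_tail (S m0) x0)).
    { exists x0. split; [unfold x0; lra|]. split; [|reflexivity].
      unfold x0. rewrite two_S. unfold Rdiv in *. lra. }
    assert (Hlow : V - C * (/2) ^ K <= normed_tail (S m0) x0).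
    { assert (hM : 2 ^ mw <= g * x0 < 2 ^ (S mw)).
      { unfold x0. replace (g * (2 ^ mw / g + c)) with (2 ^ mw + g * c) by (field; lra).
        split. nra. rewrite two_S.
        apply Rmult_lt_compat_l with (r := g) in hcw; auto.
        replace (g * (2 ^ mw / g)) with (2 ^ mw) in hcw by (field; lra). lra. }
      destruct (HE x0 mw hM) as [hr hest]. fold K nn in hr, hest.
      assert (nn * x0 - 2 ^ K = nn * c).
      { unfold x0. replace (nn * (2 ^ mw / g + c)) with (2 ^ mw * (nn / g) + nn * c) by (field; lra).
        rewrite hng, <- hKe. ring. }
      rewrite H0 in hest. apply Rabs_le_inv in hest. unfold V. lra. }
    destruct (completeness E) as [s [hs1 hs2]].
    { exists (V + C * (/2) ^ K). intros y hy. apply Hup; auto. }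
    { exists (normed_tail (S m0) x0). auto. }
    exists s. split; [split; auto|].
    assert (s <= V + C * (/2) ^ K) by (apply hs2; intros y hy; apply Hup; auto).
    assert (normed_tail (S m0) x0 <= s) by (apply hs1; auto).
    assert (hK : (N0 <= K)%nat) by (unfold K; lia).
    specialize (HN0 K hK). pose proof (powi2_pos K).
    assert (C * (/2) ^ K < eps).
    { apply Rle_lt_trans with (C * (eps / (C + 1))).
      apply Rmult_le_compat_l; lra.
      unfold Rdiv. apply Rmult_lt_reg_r with (C + 1); [lra|].
      rewrite !Rmult_assoc, Rinv_l by lra. nra. }
    fold V. apply Rabs_def1; lra.
Qed.
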